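(* Let $\alpha$ be a cylindric partition on $\mathcal C_{k,n}$ and $t$ a nonnegative integer. The number of marble games with $t$ turns that start with the arrangement $\operatorname{Arr}(\alpha)$ equals the number of marble games with $t$ turns that end with the arrangement $\operatorname{Arr}(\alpha)$, which in turn equals the number of marble games with $t$ turns that start with $\operatorname{Arr}(\alpha)$ but in which marbles are passed counterclockwise (each $p_i$ passes to $p_{i-1}$). These equalities remain true if every turn is restricted so that exactly one marble changes hands on every turn.
   Context: Fix integers $n>k\ge1$. A cylindric partition is a weakly decreasing integer sequence $(\alpha_m)_{m\in\mathbb Z}$ with $\alpha_m=\alpha_{m+k}+n-k$. There are $k$ people $p_0,\dots,p_{k-1}$ in a circle, indices taken mod $k$, with $p_{i+1}$ the clockwise neighbour of $p_i$. The arrangement $\operatorname{Arr}(\alpha)$ gives $p_i$ exactly $\alpha_{i-1}-\alpha_i$ marbles ($n-k$ marbles in total). A (clockwise) turn is a tuple $(a_0,\dots,a_{k-1})$ of nonnegative integers in which simultaneously each $p_i$ passes $a_i$ marbles to $p_{i+1}$, where $a_i$ is at most the number of marbles $p_i$ holds before the turn. A marble game with $t$ turns is an initial arrangement of the $n-k$ marbles together with a sequence of $t$ successive valid turns; it ends with the arrangement obtained after the last turn. *)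

(* Defs.v *)
From mathcomp Require Import all_boot all_order all_algebra.
Set Implicit Arguments. Unset Strict Implicit. Unset Printing Implicit Defensive.
Import Order.TTheory GRing.Theory Num.Theory.

Definition cylindric (k n : nat) (alpha : int -> int) : Prop :=
  (forall m : int, (alpha (m + 1) <= alpha m)%R) /\
  (forall m : int, alpha m = (alpha (m + k%:Z) + (n%:Z - k%:Z))%R).

Definition Arr (k : nat) (alpha : int -> int) (i : 'I_k) : nat :=
  absz (alpha ((i : nat)%:Z - 1) - alpha (i : nat)%:Z)%R.

(* Indices mod k: clockwise neighbour of p_i is p_{i+1} = ordS i,
   and p_{i-1} = ord_pred i. *)

(* One simultaneous turn x applied to arrangement a.
   cw = true : p_i passes x_i marbles to p_{i+1} (clockwise);
   cw = false: p_i passes x_i marbles to p_{i-1} (counterclockwise). *)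
Definition step (k : nat) (cw : bool) (a x : 'I_k -> nat) : 'I_k -> nat :=
  fun i => a i - x i + x (if cw then ord_pred i else ordS i).

Definition valid_turn (k : nat) (a x : 'I_k -> nat) : bool :=
  [forall i, x i <= a i].

Fixpoint valid_game (k : nat) (cw : bool) (a : 'I_k -> nat)
    (ts : seq ('I_k -> nat)) : bool :=
  match ts with
  | [::] => true
  | x :: ts' => valid_turn a x && valid_game cw (step cw a x) ts'
  end.

Fixpoint final_arr (k : nat) (cw : bool) (a : 'I_k -> nat)
    (ts : seq ('I_k -> nat)) : 'I_k -> nat :=
  match ts with
  | [::] => a
  | x :: ts' => final_arr cw (step cw a x) ts'
  end.

(* Arrangements / turns are encoded in the finite type of functions
   'I_k -> 'I_(N.+1), where N = n - k is the total number of marbles;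
   this loses nothing since every holding and every passed amount is <= N. *)
Definition fvec (k N : nat) := {ffun 'I_k -> 'I_N.+1}.
Definition tofun (k N : nat) (f : fvec k N) : 'I_k -> nat :=
  fun i => nat_of_ord (f i).

Definition one_marble (k N : nat) (x : fvec k N) : bool :=
  (\sum_(i < k) (x i : nat) == 1)%N.

Definition turns_ok (k N : nat) (restr : bool) (ts : seq (fvec k N)) : bool :=
  restr ==> all (@one_marble k N) ts.

Definition n_games_from (k N t : nat) (cw restr : bool) (A : 'I_k -> nat) : nat :=
  #|[set ts : t.-tuple (fvec k N) |
      turns_ok restr ts && valid_game cw A (map (@tofun k N) ts)]|.

Definition n_games_to (k N t : nat) (restr : bool) (A : 'I_k -> nat) : nat :=
  #|[set g : fvec k N * t.-tuple (fvec k N) |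
      [&& (\sum_(i < k) (g.1 i : nat) == N)%N,
          turns_ok restr g.2,
          valid_game true (tofun g.1) (map (@tofun k N) g.2) &
          [forall i, final_arr true (tofun g.1) (map (@tofun k N) g.2) i == A i]]]|.

(* Main.v *)
Require Import Defs.
From mathcomp Require Import all_boot all_order all_algebra zify.
From Stdlib Require Import FunctionalExtensionality.
Set Implicit Arguments. Unset Strict Implicit. Unset Printing Implicit Defensive.

Lemma card_sumb (T : finType) (P : pred T) : #|[set x | P x]| = \sum_x (P x : nat).
Proof. by rewrite -sum1_card big_mkcond /=; apply: eq_bigr => x _; rewrite inE; case: (P x). Qed.

Lemma sum_tupleS (T : finType) t (F : t.+1.-tuple T -> nat) :
  \sum_ts F ts = \sum_x \sum_(ts : t.-tuple T) F [tuple of x :: ts].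
Proof.
rewrite pair_big /=.
rewrite (reindex (fun p : T * t.-tuple T => [tuple of p.1 :: p.2])) //.
exists (fun ts : t.+1.-tuple T => (thead ts, [tuple of behead ts])).
- move=> [x ts] _ /=; idtac.
  rewrite /thead (tnth_nth x) /=; congr pair; exact: val_inj.
- by move=> ts _ /=; rewrite [RHS]tuple_eta.
Qed.

Lemma sum_tuple0 (T : finType) (F : 0.-tuple T -> nat) : \sum_ts F ts = F [tuple].
Proof. rewrite (big_pred1 [tuple]) // => ts; by rewrite /= (tuple0 ts); apply/esym/eqP. Qed.

Lemma sum_perm k (s : 'I_k -> 'I_k) (g : 'I_k -> nat) :
  injective s -> \sum_i g (s i) = \sum_i g i.
Proof. by move=> inj; rewrite [RHS](reindex_inj inj). Qed.

Lemma sum_shift k (s : 'I_k -> 'I_k) (f g : 'I_k -> nat) :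
  injective s -> (forall i, g i <= f i) -> \sum_i (f i - g i + g (s i)) = \sum_i f i.
Proof.
move=> inj le; rewrite big_split /= sum_perm // -big_split /=.
by apply: eq_bigr => i _; rewrite subnK.
Qed.

Lemma le_sum k (f : 'I_k -> nat) i : f i <= \sum_j f j.
Proof. by rewrite (bigD1 i) //= leq_addr. Qed.

Lemma sum_step k cw (a x : 'I_k -> nat) : valid_turn a x -> \sum_i step cw a x i = \sum_i a i.
Proof.
move=> /forallP v; rewrite /step; case: cw.
- by apply: sum_shift => //; apply: ord_pred_inj.
- by apply: sum_shift => //; apply: ordS_inj.
Qed.

Definition vof k N (f : 'I_k -> nat) : fvec k N := [ffun i => inord (f i)].

Lemma tf_vof k N (f : 'I_k -> nat) : (forall i, f i <= N) -> tofun (vof N f) = f.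
Proof.
by move=> le; apply: functional_extensionality => i; rewrite /tofun /vof ffunE inordK // ltnS.
Qed.

Lemma tf_inj k N (a b : fvec k N) : tofun a =1 tofun b -> a = b.
Proof. by move=> e; apply/ffunP => i; apply: val_inj; exact: e. Qed.

Lemma tf_le k N (a : fvec k N) i : tofun a i <= N.
Proof. by rewrite /tofun -ltnS. Qed.

Definition okx k N restr (x : fvec k N) := restr ==> one_marble x.
Definition sumV k N (a : fvec k N) := \sum_i tofun a i.

Definition Tm k N cw restr (a b : fvec k N) : nat :=
  \sum_(x : fvec k N) (okx restr x && valid_turn (tofun a) (tofun x) &&
     [forall i, step cw (tofun a) (tofun x) i == tofun b i]).

Definition G k N cw restr t (A : 'I_k -> nat) (Q : ('I_k -> nat) -> bool) : nat :=
  \sum_(ts : t.-tuple (fvec k N)) (turns_ok restr ts && valid_game cw A (map (@tofun k N) ts)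
     && Q (final_arr cw A (map (@tofun k N) ts))).

Fixpoint vpow (T : finType) (M : T -> T -> nat) t (g : T -> nat) : T -> nat :=
  match t with 0 => g | t'.+1 => fun a => \sum_b M a b * vpow M t' g b end.

Lemma land k N (f : 'I_k -> nat) (H : fvec k N -> nat) : (forall i, f i <= N) ->
  \sum_b ([forall i, f i == tofun b i] : nat) * H b = H (vof N f).
Proof.
move=> le; rewrite (bigD1 (vof N f)) //= tf_vof //.
rewrite big1 ?addn0.
  by rewrite (_ : [forall i, _] = true) ?mul1n //; apply/forallP => i.
move=> b nb; case: forallP => // e; case/eqP: nb; apply: tf_inj => i.
by rewrite tf_vof //; apply/esym/eqP.
Qed.

Lemma G0 k N cw restr (A : 'I_k -> nat) Q : G N cw restr 0 A Q = Q A.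
Proof. by rewrite /G sum_tuple0 /=; case: restr; case: (Q A). Qed.

Lemma GS k N cw restr t (A : 'I_k -> nat) Q : G N cw restr t.+1 A Q =
  \sum_(x : fvec k N) (okx restr x && valid_turn A (tofun x)) * G N cw restr t (step cw A (tofun x)) Q.
Proof.
rewrite /G sum_tupleS; apply: eq_bigr => x _; rewrite big_distrr /=.
apply: eq_bigr => ts _ /=; rewrite /turns_ok /okx /=.
case: restr; case: (one_marble x); case: (valid_turn A (tofun x)); rewrite /= ?mul0n ?mul1n ?andbF //.
Qed.

Lemma step_bound k N cw (a x : fvec k N) : sumV a = N -> valid_turn (tofun a) (tofun x) ->
  forall i, step cw (tofun a) (tofun x) i <= N.
Proof. move=> sa v i; apply: leq_trans (le_sum _ i) _; by rewrite (sum_step cw v); move: sa; rewrite /sumV => ->. Qed.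

Lemma G_vpow k N cw restr t Q (a : fvec k N) : sumV a = N ->
  G N cw restr t (tofun a) Q = vpow (@Tm k N cw restr) t (fun c => Q (tofun c)) a.
Proof.
elim: t a => [|t IH] a sa; first by rewrite G0.
rewrite GS /=. rewrite /Tm.
under eq_bigr do rewrite big_distrl /=.
rewrite exchange_big /=; apply: eq_bigr => x _.
case v: (okx restr x && valid_turn (tofun a) (tofun x)); last first.
  by rewrite mul0n big1 // => b _; rewrite andbA v.
rewrite mul1n.
under eq_bigr do rewrite [true && _]/=.
move/andP: v => [_ v].
rewrite land; last exact: step_bound.
rewrite -IH; first by rewrite tf_vof //; exact: step_bound.
by rewrite /sumV tf_vof ?sum_step //; exact: step_bound.
Qed.

Definition supp (T : finType) (M : T -> T -> nat) (D : pred T) :=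
  forall a b, D a -> M a b != 0 -> D b.

Lemma swapA (T : finType) (F : T -> nat) (H : T -> T -> nat) (v : T -> nat) :
  \sum_m F m * (\sum_b H m b * v b) = \sum_b (\sum_m F m * H m b) * v b.
Proof.
under eq_bigr do rewrite big_distrr /=.
rewrite exchange_big /=; apply: eq_bigr => b _.
by rewrite big_distrl /=; apply: eq_bigr => m _; rewrite mulnA.
Qed.

Lemma vpow_resp (T : finType) (M : T -> T -> nat) D : supp M D ->
  forall t g g' a, D a -> (forall b, D b -> g b = g' b) -> vpow M t g a = vpow M t g' a.
Proof.
move=> sp; elim=> [|t IH] g g' a Da e /=; first exact: e.
apply: eq_bigr => b _; case: (eqVneq (M a b) 0) => [->|nz]; first by rewrite !mul0n.
by rewrite (IH g g') //; exact: sp nz.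
Qed.

Lemma vpow_shift (T : finType) (M : T -> T -> nat) t g a :
  vpow M t.+1 g a = vpow M t (fun b => \sum_c M b c * g c) a.
Proof.
elim: t a => [|t IH] a //=.
by apply: eq_bigr => b _; rewrite -IH.
Qed.

Lemma comm_pow (T : finType) (M1 M2 : T -> T -> nat) D : supp M2 D ->
  (forall a b, D a -> \sum_m M1 a m * M2 m b = \sum_m M2 a m * M1 m b) ->
  forall t g a, D a -> \sum_m M1 a m * vpow M2 t g m = vpow M2 t (fun b => \sum_c M1 b c * g c) a.
Proof.
move=> sp cm; elim=> [|t IH] g a Da //=.
rewrite swapA.
under eq_bigr do rewrite cm //.
rewrite -swapA; apply: eq_bigr => m _.
case: (eqVneq (M2 a m) 0) => [->|nz]; first by rewrite !mul0n.
by rewrite IH //; exact: sp nz.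
Qed.

Lemma vpow_main (T : finType) (M1 M2 : T -> T -> nat) D : supp M1 D -> supp M2 D ->
  (forall a b, D a -> \sum_m M1 a m * M2 m b = \sum_m M2 a m * M1 m b) ->
  (forall a, D a -> \sum_b M1 a b = \sum_b M2 a b) ->
  forall t a, D a -> vpow M1 t (fun _ => 1) a = vpow M2 t (fun _ => 1) a.
Proof.
move=> s1 s2 cm rs; elim=> [|t IH] a Da //=.
transitivity (\sum_b M1 a b * vpow M2 t (fun _ => 1) b).
  apply: eq_bigr => b _; case: (eqVneq (M1 a b) 0) => [->|nz]; first by rewrite !mul0n.
  by rewrite IH //; exact: s1 nz.
rewrite (comm_pow s2 cm) // -/(vpow M2 t.+1 _ a) vpow_shift.
apply: (vpow_resp s2) => // b Db.
by under eq_bigr do rewrite muln1; rewrite rs //; apply: eq_bigr => c _; rewrite muln1.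
Qed.

Lemma vpow_adj (T : finType) (M : T -> T -> nat) t h g :
  \sum_a h a * vpow M t g a = \sum_c vpow (fun a b => M b a) t h c * g c.
Proof.
elim: t h => [|t IH] h //.
under [RHS]eq_bigr do rewrite vpow_shift.
rewrite [LHS]/= swapA IH.
apply: eq_bigr => c _; congr (vpow _ t _ c * g c).
apply: functional_extensionality => b; apply: eq_bigr => a _; exact: mulnC.
Qed.

Lemma card_bij (T : finType) (P1 P2 : pred T) (f g : T -> T) :
  (forall p, P1 p -> P2 (f p)) -> (forall p, P2 p -> P1 (g p)) ->
  (forall p, P1 p -> g (f p) = p) -> (forall p, P2 p -> f (g p) = p) ->
  \sum_p (P1 p : nat) = \sum_p (P2 p : nat).
Proof.
have key : forall (Q1 Q2 : pred T) (f g : T -> T), (forall p, Q1 p -> Q2 (f p)) ->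
   (forall p, Q1 p -> g (f p) = p) -> #|[set x | Q1 x]| <= #|[set x | Q2 x]|.
  move=> Q1 Q2 f1 g1 h1 k1.
  rewrite -(card_in_imset (f := f1)); last first.
    move=> x y; rewrite !inE => qx qy e.
    by rewrite -(k1 x qx) -(k1 y qy) e.
  apply: subset_leq_card; apply/subsetP => z /imsetP [x]; rewrite !inE => qx ->.
  exact: h1.
move=> h1 h2 k1 k2; rewrite -!card_sumb; apply/eqP; rewrite eqn_leq.
by rewrite (key _ _ f g) // (key _ _ g f).
Qed.

Lemma Tm_supp k N cw restr : supp (@Tm k N cw restr) (fun a => sumV a == N).
Proof.
move=> a b /eqP sa; rewrite /Tm sum_nat_eq0 => /forallPn [x /=].
case v: (okx restr x && valid_turn (tofun a) (tofun x)) => //=.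
case: forallP => //= e _; move/andP: v => [_ v].
apply/eqP; rewrite /sumV; transitivity (\sum_i tofun a i); last exact: sa.
rewrite -(sum_step cw v); apply: eq_bigr => i _.
by apply/esym/eqP; exact: e.
Qed.

Lemma Tm_rowsum k N cw restr (a : fvec k N) : sumV a = N ->
  \sum_b Tm cw restr a b = \sum_(x : fvec k N) (okx restr x && valid_turn (tofun a) (tofun x) : nat).
Proof.
move=> sa; rewrite /Tm exchange_big /=; apply: eq_bigr => x _.
case v: (okx restr x && valid_turn (tofun a) (tofun x)); last by rewrite big1.
move/andP: v => [_ v].
transitivity (\sum_(b : fvec k N) ([forall i, step cw (tofun a) (tofun x) i == tofun b i] : nat) * (fun _ => 1) b).
  by apply: eq_bigr => b _; rewrite muln1.
by rewrite land //; exact: step_bound.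
Qed.

Lemma Tm_compose k N cw1 cw2 restr (a b : fvec k N) : sumV a = N ->
  \sum_m Tm cw1 restr a m * Tm cw2 restr m b =
  \sum_(x : fvec k N) \sum_(y : fvec k N) (okx restr x && valid_turn (tofun a) (tofun x) &&
     (okx restr y && valid_turn (step cw1 (tofun a) (tofun x)) (tofun y) &&
      [forall i, step cw2 (step cw1 (tofun a) (tofun x)) (tofun y) i == tofun b i]) : nat).
Proof.
move=> sa; rewrite /Tm.
under eq_bigr do rewrite big_distrl /=.
rewrite exchange_big /=; apply: eq_bigr => x _.
case v: (okx restr x && valid_turn (tofun a) (tofun x)); last by rewrite !big1 // => m _; rewrite v.
under eq_bigr do rewrite [true && _]/=.
rewrite (land (fun m => \sum_y (okx restr y && valid_turn (tofun m) (tofun y) &&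
           [forall i, step cw2 (tofun m) (tofun y) i == tofun b i] : nat))); last first.
  by move/andP: v => [_ v]; exact: step_bound.
by move/andP: v => [_ v]; rewrite tf_vof //; exact: step_bound.
Qed.

Definition rotp k N (x : fvec k N) : fvec k N := [ffun i => x (ord_pred i)].
Definition rots k N (x : fvec k N) : fvec k N := [ffun i => x (ordS i)].

Lemma okx_perm k N restr (x y : fvec k N) (s : 'I_k -> 'I_k) : injective s ->
  (forall i, tofun y i = tofun x (s i)) -> okx restr y = okx restr x.
Proof.
move=> inj e; rewrite /okx /one_marble.
have -> : \sum_(i < k) (y i : nat) = \sum_(i < k) tofun x (s i).
  by apply: eq_bigr => i _; exact: e.
by rewrite (sum_perm (tofun x) inj).
Qed.

Lemma Tm_transp k N restr (a b : fvec k N) : Tm true restr a b = Tm false restr b a.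
Proof.
rewrite /Tm (reindex (@rots k N)); last first.
  exists (@rotp k N) => x _; apply/ffunP => i; rewrite !ffunE ?ordSK ?ord_predK //.
apply: eq_bigr => x _.
have ty : forall i, tofun (rots x) i = tofun x (ordS i) by move=> i; rewrite /tofun ffunE.
rewrite (@okx_perm _ _ _ x (rots x) (@ordS k)) //; last exact: ordS_inj.
case: (okx restr x) => //=; congr nat_of_bool.
rewrite /valid_turn /step.
apply/idP/idP; case/andP=> /forallP H1 /forallP H2; apply/andP; split; apply/forallP => i;
  move: (H1 i) (eqP (H2 i)); rewrite ?ty ?ord_predK; lia.
Qed.

Lemma ar1 (xp x xs yi ys yss a b : nat) :
 x <= a -> yi <= a - x + xp -> (a - x + xp) - yi + ys = b ->
 [/\ yi - minn xp yi + minn x ys <= a,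
     x - minn x ys + minn xs yss <= a - (yi - minn xp yi + minn x ys) + (ys - minn x ys + minn xs yss) &
     (a - (yi - minn xp yi + minn x ys) + (ys - minn x ys + minn xs yss)) - (x - minn x ys + minn xs yss)
       + (xp - minn xp yi + minn x ys) = b].
Proof. move=> *; split; lia. Qed.

Lemma ar2 (xpp xp x ypi yi ys a b : nat) :
 yi <= a -> x <= a - yi + ys -> (a - yi + ys) - x + xp = b ->
 [/\ x - minn x ys + minn xp yi <= a,
     yi - minn xp yi + minn xpp ypi <= a - (x - minn x ys + minn xp yi) + (xp - minn xp yi + minn xpp ypi) &
     (a - (x - minn x ys + minn xp yi) + (xp - minn xp yi + minn xpp ypi)) - (yi - minn xp yi + minn xpp ypi)
       + (ys - minn x ys + minn xp yi) = b].
Proof. move=> *; split; lia. Qed.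

Definition mm k N (x y : fvec k N) i := minn (tofun x i) (tofun y (ordS i)).
Definition phiY k N (x y : fvec k N) i := tofun y i - mm x y (ord_pred i) + mm x y i.
Definition phiX k N (x y : fvec k N) i := tofun x i - mm x y i + mm x y (ordS i).
Definition psiX k N (y x : fvec k N) i := tofun x i - mm x y i + mm x y (ord_pred i).
Definition psiY k N (y x : fvec k N) i :=
  tofun y i - mm x y (ord_pred i) + mm x y (ord_pred (ord_pred i)).

Definition PP k N restr cw (a b : fvec k N) (p : fvec k N * fvec k N) : bool :=
  okx restr p.1 && valid_turn (tofun a) (tofun p.1) &&
  (okx restr p.2 && valid_turn (step cw (tofun a) (tofun p.1)) (tofun p.2) &&
   [forall i, step (~~ cw) (step cw (tofun a) (tofun p.1)) (tofun p.2) i == tofun b i]).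

Lemma okx_sum k N restr (x y : fvec k N) :
  \sum_i tofun y i = \sum_i tofun x i -> okx restr y = okx restr x.
Proof. by move=> e; rewrite /okx /one_marble; congr (restr ==> (_ == 1)). Qed.

Lemma bound_of k N cw (a : fvec k N) (f : 'I_k -> nat) i :
  sumV a = N -> valid_turn (tofun a) f -> step cw (tofun a) f i <= N.
Proof.
move=> sa v; apply: leq_trans (le_sum _ i) _.
by rewrite (sum_step cw v); move: sa; rewrite /sumV => ->.
Qed.

Lemma phi_ok k N restr (a b : fvec k N) p : sumV a = N -> PP restr true a b p ->
  [/\ tofun (vof N (phiY p.1 p.2)) = phiY p.1 p.2,
      tofun (vof N (phiX p.1 p.2)) = phiX p.1 p.2 &
      PP restr false a b (vof N (phiY p.1 p.2), vof N (phiX p.1 p.2))].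
Proof.
case: p => x y sa /=; rewrite /PP /=.
case/andP=> [/andP [ox /forallP vx] /andP [/andP [oy /forallP vy] /forallP fb]].
have H : forall i, [/\ phiY x y i <= tofun a i,
     phiX x y i <= tofun a i - phiY x y i + phiY x y (ordS i) &
     (tofun a i - phiY x y i + phiY x y (ordS i)) - phiX x y i + phiX x y (ord_pred i) = tofun b i].
  move=> i; rewrite /phiY /phiX /mm ?ordSK ?ord_predK.
  apply: ar1; [exact: vx | exact: vy | exact/eqP/fb].
have vY : valid_turn (tofun a) (phiY x y) by apply/forallP => i; case: (H i).
have eY : tofun (vof N (phiY x y)) = phiY x y.
  by apply: tf_vof => i; case: (H i) => le _ _; apply: leq_trans le (tf_le _ _).
have vX : valid_turn (step false (tofun a) (phiY x y)) (phiX x y) by apply/forallP => i; case: (H i).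
have eX : tofun (vof N (phiX x y)) = phiX x y.
  apply: tf_vof => i; apply: leq_trans (bound_of false i sa vY).
  by case: (H i).
split => //; rewrite eY eX.
rewrite (okx_sum restr (x := y) (y := vof N (phiY x y))); last first.
  rewrite ?eY; transitivity (\sum_i (tofun y i - mm x y (ord_pred i) + mm x y (ord_pred (ordS i)))).
    by apply: eq_bigr => i _; rewrite /phiY ordSK.
  apply: sum_shift; first exact: ordS_inj.
  by move=> i; rewrite /mm ord_predK geq_minr.
rewrite (okx_sum restr (x := x) (y := vof N (phiX x y))); last first.
  rewrite ?eX /phiX; apply: (sum_shift (@ordS_inj k)).
  by move=> i; rewrite /mm geq_minl.
rewrite ox oy vY vX /=; apply/forallP => i; apply/eqP; by case: (H i).
Qed.

Lemma psi_ok k N restr (a b : fvec k N) q : sumV a = N -> PP restr false a b q ->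
  [/\ tofun (vof N (psiX q.1 q.2)) = psiX q.1 q.2,
      tofun (vof N (psiY q.1 q.2)) = psiY q.1 q.2 &
      PP restr true a b (vof N (psiX q.1 q.2), vof N (psiY q.1 q.2))].
Proof.
case: q => y x sa /=; rewrite /PP /=.
case/andP=> [/andP [oy /forallP vy] /andP [/andP [ox /forallP vx] /forallP fb]].
have H : forall i, [/\ psiX y x i <= tofun a i,
     psiY y x i <= tofun a i - psiX y x i + psiX y x (ord_pred i) &
     (tofun a i - psiX y x i + psiX y x (ord_pred i)) - psiY y x i + psiY y x (ordS i) = tofun b i].
  move=> i; rewrite /psiY /psiX /mm ?ordSK ?ord_predK.
  apply: ar2; [exact: vy | exact: vx | exact/eqP/fb].
have vX : valid_turn (tofun a) (psiX y x) by apply/forallP => i; case: (H i).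
have eX : tofun (vof N (psiX y x)) = psiX y x.
  by apply: tf_vof => i; case: (H i) => le _ _; apply: leq_trans le (tf_le _ _).
have vY : valid_turn (step true (tofun a) (psiX y x)) (psiY y x) by apply/forallP => i; case: (H i).
have eY : tofun (vof N (psiY y x)) = psiY y x.
  apply: tf_vof => i; apply: leq_trans (bound_of true i sa vX).
  by case: (H i).
split => //; rewrite eY eX.
rewrite (okx_sum restr (x := x) (y := vof N (psiX y x))); last first.
  rewrite ?eX /psiX; apply: (sum_shift (@ord_pred_inj k)).
  by move=> i; rewrite /mm geq_minl.
rewrite (okx_sum restr (x := y) (y := vof N (psiY y x))); last first.
  rewrite ?eY /psiY; apply: (sum_shift (g := fun i => mm x y (ord_pred i)) (@ord_pred_inj k)).
  by move=> i; rewrite /mm ord_predK geq_minr.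
rewrite ox oy vY vX /=; apply/forallP => i; apply/eqP; by case: (H i).
Qed.

Lemma phi_psi k N restr (a b : fvec k N) p : sumV a = N -> PP restr true a b p ->
  (vof N (psiX (vof N (phiY p.1 p.2)) (vof N (phiX p.1 p.2))),
   vof N (psiY (vof N (phiY p.1 p.2)) (vof N (phiX p.1 p.2)))) = p.
Proof.
move=> sa P; case: (phi_ok sa P) => eY eX _; case: p P eY eX => x y P /= eY eX.
have E1 : psiX (vof N (phiY x y)) (vof N (phiX x y)) = tofun x.
  apply: functional_extensionality => i.
  rewrite /psiX /mm eY eX /phiY /phiX /mm ?ordSK ?ord_predK; lia.
have E2 : psiY (vof N (phiY x y)) (vof N (phiX x y)) = tofun y.
  apply: functional_extensionality => i.
  rewrite /psiY /mm eY eX /phiY /phiX /mm ?ordSK ?ord_predK; lia.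
rewrite E1 E2; congr pair; apply: tf_inj => i; rewrite tf_vof // => j; exact: tf_le.
Qed.

Lemma psi_phi k N restr (a b : fvec k N) q : sumV a = N -> PP restr false a b q ->
  (vof N (phiY (vof N (psiX q.1 q.2)) (vof N (psiY q.1 q.2))),
   vof N (phiX (vof N (psiX q.1 q.2)) (vof N (psiY q.1 q.2)))) = q.
Proof.
move=> sa P; case: (psi_ok sa P) => eX eY _; case: q P eY eX => y x P /= eY eX.
have E1 : phiY (vof N (psiX y x)) (vof N (psiY y x)) = tofun y.
  apply: functional_extensionality => i.
  rewrite /phiY /mm eY eX /psiY /psiX /mm ?ordSK ?ord_predK; lia.
have E2 : phiX (vof N (psiX y x)) (vof N (psiY y x)) = tofun x.
  apply: functional_extensionality => i.
  rewrite /phiX /mm eY eX /psiY /psiX /mm ?ordSK ?ord_predK; lia.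
rewrite E1 E2; congr pair; apply: tf_inj => i; rewrite tf_vof // => j; exact: tf_le.
Qed.

Lemma Tm_comm k N restr (a b : fvec k N) : sumV a = N ->
  \sum_m Tm true restr a m * Tm false restr m b = \sum_m Tm false restr a m * Tm true restr m b.
Proof.
move=> sa; rewrite !Tm_compose // !pair_big /=.
apply: (@card_bij _ (PP restr true a b) (PP restr false a b)
  (fun p => (vof N (phiY p.1 p.2), vof N (phiX p.1 p.2)))
  (fun q => (vof N (psiX q.1 q.2), vof N (psiY q.1 q.2)))).
- by move=> p P; case: (phi_ok sa P).
- by move=> q P; case: (psi_ok sa P).
- by move=> p P; exact: phi_psi sa P.
- by move=> q P; exact: psi_phi sa P.
Qed.

Lemma Arr_sum k n (alpha : int -> int) : (1 <= k)%N -> (k < n)%N -> cylindric k n alpha ->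
  \sum_(i < k) Arr alpha i = n - k.
Proof.
move=> k1 kn [mono per].
pose f (i : nat) := absz (alpha (i%:Z - 1) - alpha i%:Z)%R.
have fE : forall j : nat, (Posz (f j) = alpha (j%:Z - 1) - alpha j%:Z)%R.
  move=> j; rewrite /f gez0_abs // Num.Theory.subr_ge0.
  have := mono (j%:Z - 1)%R; rewrite GRing.subrK; exact.
have tel : forall j, (Posz (\sum_(0 <= i < j) f i) = alpha (-1) - alpha (j%:Z - 1))%R.
  elim=> [|j IH]; first by rewrite big_geq // GRing.subrr.
  rewrite big_nat_recr //= PoszD IH fE.
  have -> : ((j.+1)%:Z - 1 = j%:Z)%R by lia.
  by rewrite GRing.addrA GRing.subrK.
have : (Posz (\sum_(i < k) Arr alpha i) = n%:Z - k%:Z)%R.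
  rewrite -(big_mkord xpredT f) tel.
  have := per (-1)%R; rewrite (_ : (-1 + k%:Z = k%:Z - 1)%R); last by lia.
  move=> ->; lia.
lia.
Qed.

Lemma from_vpow k N t cw restr (a : fvec k N) : sumV a = N ->
  n_games_from N t cw restr (tofun a) = vpow (@Tm k N cw restr) t (fun _ => 1) a.
Proof.
move=> sa; rewrite /n_games_from card_sumb -(G_vpow cw restr t (fun _ => true) sa) /G.
by apply: eq_bigr => ts _; rewrite andbT.
Qed.

Lemma to_vpow k N t restr (a : fvec k N) : sumV a = N ->
  n_games_to N t restr (tofun a) = vpow (@Tm k N false restr) t (fun _ => 1) a.
Proof.
move=> sa; rewrite /n_games_to card_sumb.
pose F (a0 : fvec k N) (ts : t.-tuple (fvec k N)) : nat :=
  [&& (\sum_(i < k) (a0 i : nat) == N)%N, turns_ok restr ts,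
      valid_game true (tofun a0) (map (@tofun k N) ts) &
      [forall i, final_arr true (tofun a0) (map (@tofun k N) ts) i == tofun a i]].
transitivity (\sum_a0 \sum_ts F a0 ts); first by rewrite pair_big.
transitivity (\sum_a0 ((sumV a0 == N) : nat) *
   vpow (@Tm k N true restr) t (fun c => c == a) a0).
  apply: eq_bigr => a0 _; rewrite /F.
  case s0: (sumV a0 == N); last first.
    by rewrite mul0n big1 // => ts _; move: s0; rewrite /sumV /tofun => ->.
  rewrite mul1n.
  transitivity (vpow (@Tm k N true restr) t (fun c => [forall i, tofun c i == tofun a i]) a0).
    have s0' : sumV a0 = N by apply/eqP.
    rewrite -(G_vpow true restr t (fun f => [forall i, f i == tofun a i]) s0') /G.
    by apply: eq_bigr => ts _; rewrite /= andbA.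
  congr (vpow _ t _ a0); apply: functional_extensionality => c.
  congr nat_of_bool; apply/idP/idP => [/forallP e | /eqP ->]; last by apply/forallP.
  by apply/eqP; apply: tf_inj => i; apply/eqP; exact: e.
rewrite vpow_adj.
rewrite (bigD1 a) //= eqxx muln1 big1 ?addn0; last first.
  by move=> c /negPf ->; rewrite muln0.
have -> : (fun x y : fvec k N => Tm true restr y x) = (fun x y => Tm false restr x y).
  by apply: functional_extensionality => x; apply: functional_extensionality => y; exact: Tm_transp.
apply: (vpow_resp (@Tm_supp k N false restr)); first exact/eqP.
by move=> b ->.
Qed.

Lemma cw_ccw k N t restr (a : fvec k N) : sumV a = N ->
  vpow (@Tm k N true restr) t (fun _ => 1) a = vpow (@Tm k N false restr) t (fun _ => 1) a.
Proof.
move=> sa; apply: (vpow_main (@Tm_supp k N true restr) (@Tm_supp k N false restr)).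
- by move=> x y /eqP sx; exact: Tm_comm.
- by move=> x /eqP sx; rewrite !Tm_rowsum.
- exact/eqP.
Qed.

Unset Implicit Arguments.
Theorem mainTheorem9 (k n : nat) (alpha : int -> int) (t : nat) :
  (1 <= k)%N -> (k < n)%N -> cylindric k n alpha ->
  forall restr : bool,
    n_games_from (n - k) t true restr (@Arr k alpha) =
      n_games_to (n - k) t restr (@Arr k alpha) /\
    n_games_to (n - k) t restr (@Arr k alpha) =
      n_games_from (n - k) t false restr (@Arr k alpha).
Proof.
move=> k1 kn cyl restr.
have sA := Arr_sum k1 kn cyl.
have ea : tofun (vof (n - k) (@Arr k alpha)) = @Arr k alpha.
  by apply: tf_vof => i; rewrite -sA le_sum.
have Da : sumV (vof (n - k) (@Arr k alpha)) = n - k by rewrite /sumV ea.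
rewrite -ea from_vpow // to_vpow // from_vpow //; split => //.
exact: cw_ccw.
Qed.
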